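(* Let $\mathcal{A}=\{A,T,C,G\}$ with $p_A=p_T>0$ and $p_C=p_G>0$, let $S$ be a scoring function on $\mathcal{A}^*$, and let $T^{DNA}=T_X+T_Y$ be as defined in the context. If there exists $\epsilon>0$ such that $\lambda(S)-\lambda(S-\epsilon T^{DNA})>0$, then $\mathrm{VAR}[L_n(S)]=\Theta(n)$.
   Context: Let $\mathcal{A}=\{A,T,C,G\}$ and $\mathcal{A}^*=\mathcal{A}\cup\{g\}$ where $g$ is a gap symbol. A scoring function is a symmetric map $S:\mathcal{A}^*\times\mathcal{A}^*\to\mathbb{R}$. For strings $x=x_1\dots x_m$, $y=y_1\dots y_{m'}$ over $\mathcal{A}$, an alignment $\pi$ is a sequence $((\mu_1,\nu_1),\dots,(\mu_k,\nu_k))$, $k\ge0$, with $1\le\mu_1<\dots<\mu_k\le m$ and $1\le\nu_1<\dots<\nu_k\le m'$; its score is $S_\pi(x,y)=\sum_{i=1}^k S(x_{\mu_i},y_{\nu_i})+\sum_{j\notin\{\mu_i\}}S(x_j,g)+\sum_{j\notin\{\nu_i\}}S(g,y_j)$, and $L_S(x,y)=\max_\pi S_\pi(x,y)$. Let $X=X_1\dots X_n$, $Y=Y_1\dots Y_n$ where all $2n$ letters are i.i.d. with $P(X_i=c)=P(Y_j=c)=p_c$. Put $L_n(S)=L_S(X,Y)$, $\lambda_n(S)=E[L_n(S)]/n$, $\lambda(S)=\lim_n\lambda_n(S)$. Define $T_X(U,V)=\tfrac12(S(A,V)-S(U,V))+\tfrac12(S(T,V)-S(U,V))$ for $U\in\{C,G\}$,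 $V\in\mathcal{A}^*$, and $T_X(U,V)=0$ for $U\notin\{C,G\}$; define $T_Y(V,U)=\tfrac12(S(V,A)-S(V,U))+\tfrac12(S(V,T)-S(V,U))$ for $U\in\{C,G\}$, $V\in\mathcal{A}^*$, and $T_Y(V,U)=0$ for $U\notin\{C,G\}$; $T^{DNA}=T_X+T_Y$ and $S-\epsilon T^{DNA}$ is the pointwise combination. (Here $T$ in $T_X$'s formula denotes the letter $T$.) *)

(* Defs.v *)
From Stdlib Require Import Reals List Arith.
Import ListNotations.
Open Scope R_scope.

Inductive letter : Type := lA | lT | lC | lG.

(* A^* = A ∪ {g}: [None] is the gap symbol g. *)
Definition gletter := option letter.
Definition gap : gletter := None.

Definition scoring := gletter -> gletter -> R.

Definition symmetric_scoring (S : scoring) : Prop := forall u v, S u v = S v u.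

(* 1-based access to a word *)
Definition at1 (x : list letter) (i : nat) : gletter := Some (nth (i - 1) x lA).

(* An alignment is a list of index pairs (mu_i, nu_i), 1-based. *)
Fixpoint strictly_incr (l : list (nat * nat)) : bool :=
  match l with
  | [] => true
  | p :: l' =>
      match l' with
      | [] => true
      | q :: _ => (Nat.ltb (fst p) (fst q) && Nat.ltb (snd p) (snd q) && strictly_incr l')%bool
      end
  end.

Fixpoint sublists {A : Type} (l : list A) : list (list A) :=
  match l with
  | [] => [[]]
  | a :: l' => let r := sublists l' in map (cons a) r ++ r
  end.

Definition is_alignment (m m' : nat) (pi : list (nat * nat)) : Prop :=
  strictly_incr pi = true /\
  Forall (fun p => (1 <= fst p <= m)%nat /\ (1 <= snd p <= m')%nat) pi.

(* All alignments of words of lengths m, m': the strictly increasing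
   sub-sequences of the lexicographically ordered grid [1..m]x[1..m']. *)
Definition alignments (m m' : nat) : list (list (nat * nat)) :=
  filter strictly_incr (sublists (list_prod (seq 1 m) (seq 1 m'))).

Definition Rsum (l : list R) : R := fold_right Rplus 0 l.

Definition align_score (S : scoring) (x y : list letter) (pi : list (nat * nat)) : R :=
  Rsum (map (fun p => S (at1 x (fst p)) (at1 y (snd p))) pi)
  + Rsum (map (fun j => S (at1 x j) gap)
              (filter (fun j => negb (existsb (Nat.eqb j) (map fst pi))) (seq 1 (length x))))
  + Rsum (map (fun j => S gap (at1 y j))
              (filter (fun j => negb (existsb (Nat.eqb j) (map snd pi))) (seq 1 (length y)))).

Definition L_S (S : scoring) (x y : list letter) : R :=
  fold_right Rmax (align_score S x y [])
    (map (align_score S x y) (alignments (length x) (length y))).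

Fixpoint words (n : nat) : list (list letter) :=
  match n with
  | O => [[]]
  | S k => flat_map (fun w => map (fun c => c :: w) [lA; lT; lC; lG]) (words k)
  end.

Definition word_prob (p : letter -> R) (w : list letter) : R :=
  fold_right Rmult 1 (map p w).

(* Expectation of f(X,Y), X,Y independent i.i.d. words of length n with letter law p *)
Definition Expect (p : letter -> R) (n : nat) (f : list letter -> list letter -> R) : R :=
  Rsum (flat_map (fun x => map (fun y => word_prob p x * word_prob p y * f x y) (words n))
                 (words n)).

Definition E_Ln (p : letter -> R) (S : scoring) (n : nat) : R :=
  Expect p n (fun x y => L_S S x y).

Definition Var_Ln (p : letter -> R) (S : scoring) (n : nat) : R :=
  Expect p n (fun x y => (L_S S x y) ^ 2) - (E_Ln p S n) ^ 2.

Definition lambda_n (p : letter -> R) (S : scoring) (n : nat) : R :=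
  E_Ln p S n / INR n.

Definition lambda_is (p : letter -> R) (S : scoring) (l : R) : Prop :=
  Un_cv (lambda_n p S) l.

Definition isCG (u : gletter) : bool :=
  match u with Some lC | Some lG => true | _ => false end.

Definition T_X (S : scoring) (u v : gletter) : R :=
  if isCG u then /2 * (S (Some lA) v - S u v) + /2 * (S (Some lT) v - S u v) else 0.

Definition T_Y (S : scoring) (v u : gletter) : R :=
  if isCG u then /2 * (S v (Some lA) - S v u) + /2 * (S v (Some lT) - S v u) else 0.

Definition T_DNA (S : scoring) : scoring := fun u v => T_X S u v + T_Y S u v.

Definition perturb (S : scoring) (eps : R) : scoring := fun u v => S u v - eps * T_DNA S u v.

(* Main.v *)
Require Import Defs.
From Stdlib Require Import Reals Lra Psatz Lia List Arith.
Import ListNotations.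
Open Scope R_scope.


Lemma Rsum_app l1 l2 : Rsum (l1 ++ l2) = Rsum l1 + Rsum l2.
Proof. induction l1; simpl; [lra|rewrite IHl1; lra]. Qed.

Lemma Rsum_map_plus {A} (l : list A) f g :
  Rsum (map (fun x => f x + g x) l) = Rsum (map f l) + Rsum (map g l).
Proof. induction l; simpl; [lra|rewrite IHl; lra]. Qed.

Lemma Rsum_map_scal {A} (l : list A) a f :
  Rsum (map (fun x => a * f x) l) = a * Rsum (map f l).
Proof. induction l; simpl; [lra|rewrite IHl; lra]. Qed.

Lemma Rsum_map_ext_in {A} (l : list A) f g :
  (forall x, In x l -> f x = g x) -> Rsum (map f l) = Rsum (map g l).
Proof. intro H. f_equal. apply map_ext_in. exact H. Qed.

Lemma Rsum_map_le_in {A} (l : list A) f g :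
  (forall x, In x l -> f x <= g x) -> Rsum (map f l) <= Rsum (map g l).
Proof. induction l; simpl; intros H; [lra|].
  pose proof (H a (or_introl eq_refl)). pose proof (IHl (fun x h => H x (or_intror h))). lra. Qed.

Lemma Rsum_map_zero {A} (l : list A) f :
  (forall x, In x l -> f x = 0) -> Rsum (map f l) = 0.
Proof. induction l; simpl; intros H; [lra|].
  rewrite H by auto. rewrite IHl by auto. lra. Qed.

Lemma Rsum_flat_map {A B} (l : list A) (h : A -> list B) (f : B -> R) :
  Rsum (map f (flat_map h l)) = Rsum (map (fun a => Rsum (map f (h a))) l).
Proof. induction l; simpl; auto. rewrite map_app, Rsum_app, IHl. lra. Qed.

Lemma Rsum_exchange {A B} (l1 : list A) (l2 : list B) (g : A -> B -> R) :
  Rsum (map (fun a => Rsum (map (fun b => g a b) l2)) l1) =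
  Rsum (map (fun b => Rsum (map (fun a => g a b) l1)) l2).
Proof. induction l1; simpl.
  - rewrite Rsum_map_zero; auto.
  - rewrite IHl1. rewrite <- Rsum_map_plus. reflexivity. Qed.

Lemma Rsum_filter {A} (l : list A) (P : A -> bool) f :
  Rsum (map f (filter P l)) = Rsum (map (fun x => if P x then f x else 0) l).
Proof. induction l; simpl; auto. destruct (P a); simpl; rewrite IHl; lra. Qed.

Lemma Rsum_nonneg {A} (l : list A) f :
  (forall x, 0 <= f x) -> 0 <= Rsum (map f l).
Proof. intro H; induction l; simpl; [lra|]. pose proof (H a); lra. Qed.

Lemma Rsum_nonneg_le {A} (l : list A) f a :
  (forall x, 0 <= f x) -> In a l -> f a <= Rsum (map f l).
Proof. induction l as [|b l IHl]; simpl; intros H Hi; [tauto|]. destruct Hi as [<-|Hi].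
  - pose proof (Rsum_nonneg l f H). lra.
  - pose proof (H b). pose proof (IHl H Hi). lra. Qed.

Lemma sum_ind_seq_zero (b s n : nat) (h : R) :
  (b < s)%nat -> Rsum (map (fun k => if Nat.eqb b k then h else 0) (seq s n)) = 0.
Proof. revert s; induction n; intros s Hb; simpl; auto.
  destruct (Nat.eqb_spec b s); [lia|]. rewrite IHn by lia. lra. Qed.

Lemma sum_ind_seq (b s n : nat) (h : R) :
  (s <= b < s + n)%nat -> Rsum (map (fun k => if Nat.eqb b k then h else 0) (seq s n)) = h.
Proof. revert s; induction n; intros s Hb; simpl; [lia|].
  destruct (Nat.eqb_spec b s).
  - rewrite sum_ind_seq_zero by lia. lra.
  - rewrite IHn by lia. lra. Qed.

Lemma sum_ind_seq_out (b s n : nat) (h : R) :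
  ~(s <= b < s + n)%nat -> Rsum (map (fun k => if Nat.eqb b k then h else 0) (seq s n)) = 0.
Proof. intro H. apply Rsum_map_zero. intros k Hk. apply in_seq in Hk.
  destruct (Nat.eqb_spec b k); [lia|auto]. Qed.

Definition good (p : letter -> R) := p lA = p lT /\ p lC = p lG /\ 0 < p lA /\ 0 < p lC /\
  p lA + p lT + p lC + p lG = 1.

Definition Ew (p : letter -> R) n (g : list letter -> R) :=
  Rsum (map (fun x => word_prob p x * g x) (words n)).

Lemma Ew_plus p n f g : Ew p n (fun x => f x + g x) = Ew p n f + Ew p n g.
Proof. unfold Ew. rewrite <- Rsum_map_plus. f_equal. apply map_ext. intros; ring. Qed.

Lemma Ew_scal p n a f : Ew p n (fun x => a * f x) = a * Ew p n f.
Proof. unfold Ew. rewrite <- Rsum_map_scal. f_equal. apply map_ext. intros; ring. Qed.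

Lemma Ew_minus p n f g : Ew p n (fun x => f x - g x) = Ew p n f - Ew p n g.
Proof. transitivity (Ew p n (fun x => f x + (-1) * g x)).
  unfold Ew. f_equal. apply map_ext. intros; ring.
  rewrite Ew_plus, Ew_scal. ring. Qed.

Lemma Ew_ext_in p n f g : (forall x, In x (words n) -> f x = g x) -> Ew p n f = Ew p n g.
Proof. intros H. unfold Ew. apply Rsum_map_ext_in. intros x Hx. rewrite H; auto. Qed.

Lemma word_prob_nonneg p x : good p -> 0 <= word_prob p x.
Proof. intros (h1&h2&h3&h4&h5). unfold word_prob. induction x; simpl. lra.
  apply Rmult_le_pos; [destruct a; lra|exact IHx]. Qed.

Lemma Ew_mono p n f g : good p -> (forall x, In x (words n) -> f x <= g x) -> Ew p n f <= Ew p n g.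
Proof. intros Hp H. unfold Ew. apply Rsum_map_le_in. intros x Hx.
  apply Rmult_le_compat_l; auto using word_prob_nonneg. Qed.

Lemma Ew_S p k g : Ew p (S k) g = Ew p k (fun w =>
  p lA * g (lA :: w) + p lT * g (lT :: w) + p lC * g (lC :: w) + p lG * g (lG :: w)).
Proof. unfold Ew. simpl words. rewrite Rsum_flat_map. f_equal. apply map_ext. intros w.
  simpl. unfold word_prob; simpl. ring. Qed.

Lemma Ew_0 p g : Ew p 0 g = g [].
Proof. unfold Ew. simpl. unfold word_prob; simpl. ring. Qed.

Lemma Ew_const p n a : good p -> Ew p n (fun _ => a) = a.
Proof. intros Hp. induction n. rewrite Ew_0; auto. rewrite Ew_S.
  destruct Hp as (h1&h2&h3&h4&h5).
  transitivity (Ew p n (fun _ => a)); [|exact IHn]. apply Ew_ext_in. intros. transitivity ((p lA + p lT + p lC + p lG) * a); [ring|rewrite h5; ring]. Qed.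

Lemma Ew_zero p n : Ew p n (fun _ => 0) = 0.
Proof. unfold Ew. apply Rsum_map_zero. intros; ring. Qed.

Lemma Ew_sum {A} p n (l : list A) h :
  Ew p n (fun x => Rsum (map (fun k => h k x) l)) = Rsum (map (fun k => Ew p n (h k)) l).
Proof. induction l; simpl. apply Ew_zero. rewrite Ew_plus, IHl. auto. Qed.

Lemma words_length n x : In x (words n) -> length x = n.
Proof. revert x; induction n; simpl; intros x H. destruct H as [<-|[]]; auto.
  apply in_flat_map in H. destruct H as (w & Hw & Hx). simpl in Hx.
  destruct Hx as [<-|[<-|[<-|[<-|[]]]]]; simpl; f_equal; auto. Qed.

Lemma Ew_bound p n f c : good p -> (forall x, In x (words n) -> - c <= f x <= c) -> - c <= Ew p n f <= c.
Proof. intros Hp H. split.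
  - rewrite <- (Ew_const p n (-c)) by auto. apply Ew_mono; auto. intros x Hx; apply H; auto.
  - transitivity (Ew p n (fun _ => c)); [|rewrite Ew_const by auto; lra].
    apply Ew_mono; auto. intros x Hx; apply H; auto. Qed.

Lemma Expect_Ew p n f : Expect p n f = Ew p n (fun x => Ew p n (fun y => f x y)).
Proof. unfold Expect, Ew.
  assert (HF : forall (l : list (list letter)) (h : list letter -> list R),
    Rsum (flat_map h l) = Rsum (map (fun a => Rsum (h a)) l)).
  { induction l; simpl; auto. intros. rewrite Rsum_app, IHl. auto. }
  rewrite HF. f_equal. apply map_ext. intro x.
  rewrite <- Rsum_map_scal. f_equal. apply map_ext. intros; ring. Qed.
Lemma var4 a b c d fa fb fc fd K : 0<=a -> 0<=b -> 0<=c -> 0<=d -> a+b+c+d=1 ->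
  -K <= fb - fa <= K -> -K <= fc - fa <= K -> -K <= fd - fa <= K ->
  a*fa^2+b*fb^2+c*fc^2+d*fd^2 - (a*fa+b*fb+c*fc+d*fd)^2 <= K^2.
Proof. intros Ha Hb Hc Hd Hs H1 H2 H3.
  assert (E: a*fa^2+b*fb^2+c*fc^2+d*fd^2 - (a*fa+b*fb+c*fc+d*fd)^2
     = b*(fb-fa)^2+c*(fc-fa)^2+d*(fd-fa)^2 - (b*(fb-fa)+c*(fc-fa)+d*(fd-fa))^2).
  { replace a with (1 - b - c - d) by lra. ring. }
  rewrite E.
  assert (0 <= (K - (fb-fa))*(K + (fb-fa))) by (apply Rmult_le_pos; lra).
  assert (0 <= (K - (fc-fa))*(K + (fc-fa))) by (apply Rmult_le_pos; lra).
  assert (0 <= (K - (fd-fa))*(K + (fd-fa))) by (apply Rmult_le_pos; lra).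
  assert (0 <= (b*(fb-fa)+c*(fc-fa)+d*(fd-fa))^2) by apply pow2_ge_0.
  assert (b*(fb-fa)^2 <= b*K^2) by (apply Rmult_le_compat_l; nra).
  assert (c*(fc-fa)^2 <= c*K^2) by (apply Rmult_le_compat_l; nra).
  assert (d*(fd-fa)^2 <= d*K^2) by (apply Rmult_le_compat_l; nra).
  assert (0 <= a * K^2) by nra.
  assert (HK: a*K^2+b*K^2+c*K^2+d*K^2 = K^2) by (transitivity ((a+b+c+d)*K^2); [ring| rewrite Hs; ring]). lra. Qed.

Fixpoint upd (k : nat) (d : letter) (x : list letter) : list letter :=
  match x, k with
  | [], _ => []
  | c :: r, O => d :: r
  | c :: r, S k' => c :: upd k' d r
  end.

Definition BD (F : list letter -> R) (c : R) := forall x i d, - c <= F (upd i d x) - F x <= c.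

Lemma word_var p m F c : good p -> BD F c ->
  Ew p m (fun x => F x ^ 2) - (Ew p m F) ^ 2 <= INR m * c ^ 2.
Proof. intros Hp. revert F. induction m; intros F HF.
  - rewrite !Ew_0. simpl. lra.
  - rewrite !Ew_S.
    set (G := fun w => p lA * F (lA :: w) + p lT * F (lT :: w) + p lC * F (lC :: w) + p lG * F (lG :: w)).
    assert (HG : BD G c).
    { intros w i d. unfold G.
      pose proof (HF (lA :: w) (S i) d). pose proof (HF (lT :: w) (S i) d).
      pose proof (HF (lC :: w) (S i) d). pose proof (HF (lG :: w) (S i) d). simpl in *.
      destruct Hp as (h1&h2&h3&h4&h5).
      assert (E: p lA * F (lA :: upd i d w) + p lT * F (lT :: upd i d w) + p lC * F (lC :: upd i d w) +
        p lG * F (lG :: upd i d w) - (p lA * F (lA :: w) + p lT * F (lT :: w) + p lC * F (lC :: w) + p lG * F (lG :: w))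
        = p lA * (F (lA :: upd i d w) - F (lA :: w)) + p lT * (F (lT :: upd i d w) - F (lT :: w))
        + p lC * (F (lC :: upd i d w) - F (lC :: w)) + p lG * (F (lG :: upd i d w) - F (lG :: w))) by ring.
      rewrite E. split; nra. }
    pose proof (IHm G HG) as IH.
    assert (Hv : forall w, (p lA * F (lA :: w) ^ 2 + p lT * F (lT :: w) ^ 2 + p lC * F (lC :: w) ^ 2 +
         p lG * F (lG :: w) ^ 2) - G w ^ 2 <= c ^ 2).
    { intro w. unfold G. destruct Hp as (h1&h2&h3&h4&h5). apply var4; try lra.
      - exact (HF (lA :: w) 0%nat lT).
      - exact (HF (lA :: w) 0%nat lC).
      - exact (HF (lA :: w) 0%nat lG). }
    assert (Ew p m (fun w => p lA * F (lA :: w) ^ 2 + p lT * F (lT :: w) ^ 2 + p lC * F (lC :: w) ^ 2 +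
         p lG * F (lG :: w) ^ 2) = Ew p m (fun w => (p lA * F (lA :: w) ^ 2 + p lT * F (lT :: w) ^ 2 + p lC * F (lC :: w) ^ 2 +
         p lG * F (lG :: w) ^ 2) - G w ^ 2) + Ew p m (fun w => G w ^ 2)) as E.
    { rewrite <- Ew_plus. apply Ew_ext_in. intros; ring. }
    fold G. rewrite E.
    assert (Ew p m (fun w => (p lA * F (lA :: w) ^ 2 + p lT * F (lT :: w) ^ 2 + p lC * F (lC :: w) ^ 2 +
         p lG * F (lG :: w) ^ 2) - G w ^ 2) <= c ^ 2).
    { rewrite <- (Ew_const p m (c^2)) by auto. apply Ew_mono; auto. }
    rewrite S_INR. lra.
Qed.

Definition BD2 (f : list letter -> list letter -> R) c :=
  (forall y, BD (fun x => f x y) c) /\ (forall x, BD (fun y => f x y) c).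

Lemma pair_var p n f c : good p -> BD2 f c ->
  Expect p n (fun x y => f x y ^ 2) - (Expect p n f) ^ 2 <= 2 * INR n * c ^ 2.
Proof. intros Hp [Hx Hy]. rewrite !Expect_Ew.
  set (g := fun x => Ew p n (fun y => f x y)).
  assert (Hg : BD g c).
  { intros x i d. unfold g. rewrite <- Ew_minus. apply Ew_bound; auto. intros y _. apply (Hx y). }
  pose proof (word_var p n g c Hp Hg).
  assert (E : Ew p n (fun x => Ew p n (fun y => f x y ^ 2)) =
     Ew p n (fun x => Ew p n (fun y => f x y ^ 2) - g x ^ 2) + Ew p n (fun x => g x ^ 2)).
  { rewrite <- Ew_plus. apply Ew_ext_in. intros; ring. }
  rewrite E. fold g.
  assert (Ew p n (fun x => Ew p n (fun y => f x y ^ 2) - g x ^ 2) <= INR n * c ^ 2).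
  { rewrite <- (Ew_const p n (INR n * c^2)) by auto. apply Ew_mono; auto. intros x _.
    apply (word_var p n (fun y => f x y) c Hp (Hy x)). }
  lra. Qed.

Lemma length_upd k d x : length (upd k d x) = length x.
Proof. revert k; induction x; intros k; destruct k; simpl; auto. Qed.

Lemma upd_out k d x : (length x <= k)%nat -> upd k d x = x.
Proof. revert k; induction x; intros k H; destruct k; simpl in *; auto; try lia.
  rewrite IHx by lia. auto. Qed.

Lemma nth_upd k d x j a : (k < length x)%nat ->
  nth j (upd k d x) a = if Nat.eqb j k then d else nth j x a.
Proof. revert k j; induction x; intros k j H; simpl in *; [lia|].
  destruct k, j; simpl; auto. apply IHx. lia. Qed.

Lemma at1_upd k d x j : (k < length x)%nat -> (1 <= j)%nat ->
  at1 (upd k d x) j = if Nat.eqb j (S k) then Some d else at1 x j.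
Proof. intros H Hj. unfold at1. rewrite nth_upd by auto.
  destruct (Nat.eqb_spec (j-1) k), (Nat.eqb_spec j (S k)); auto; lia. Qed.

Definition AL (m m' : nat) (pi : list (nat * nat)) :=
  Forall (fun q => (1 <= fst q <= m)%nat /\ (1 <= snd q <= m')%nat) pi.

Lemma sum_ind_filter (n : nat) (P : nat -> bool) (a : nat) (h : R) :
  (1 <= a <= n)%nat ->
  Rsum (map (fun j => if Nat.eqb j a then h else 0) (filter P (seq 1 n))) = if P a then h else 0.
Proof. intros Ha. rewrite Rsum_filter.
  transitivity (Rsum (map (fun j => if Nat.eqb a j then (if P a then h else 0) else 0) (seq 1 n))).
  - apply Rsum_map_ext_in. intros j _. destruct (Nat.eqb_spec j a), (Nat.eqb_spec a j); subst; try lia;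
    destruct (P _); auto.
  - apply sum_ind_seq. lia. Qed.

Lemma align_upd_x Sc x y pi k d : (k < length x)%nat -> AL (length x) (length y) pi ->
  align_score Sc (upd k d x) y pi = align_score Sc x y pi
   + Rsum (map (fun q => if Nat.eqb (fst q) (S k) then Sc (Some d) (at1 y (snd q)) - Sc (at1 x (S k)) (at1 y (snd q)) else 0) pi)
   + (if existsb (Nat.eqb (S k)) (map fst pi) then 0 else Sc (Some d) gap - Sc (at1 x (S k)) gap).
Proof. intros Hk Hpi. unfold align_score. rewrite length_upd.
  set (fx := filter _ (seq 1 (length x))).
  assert (E1 : Rsum (map (fun p0 => Sc (at1 (upd k d x) (fst p0)) (at1 y (snd p0))) pi) =
     Rsum (map (fun p0 => Sc (at1 x (fst p0)) (at1 y (snd p0))) pi) +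
     Rsum (map (fun q => if Nat.eqb (fst q) (S k) then Sc (Some d) (at1 y (snd q)) - Sc (at1 x (S k)) (at1 y (snd q)) else 0) pi)).
  { rewrite <- Rsum_map_plus. apply Rsum_map_ext_in. intros q Hq.
    unfold AL in Hpi; rewrite Forall_forall in Hpi. specialize (Hpi q Hq).
    rewrite at1_upd by lia. destruct (Nat.eqb_spec (fst q) (S k)); [rewrite e|]; ring. }
  assert (E2 : Rsum (map (fun j => Sc (at1 (upd k d x) j) gap) fx) =
     Rsum (map (fun j => Sc (at1 x j) gap) fx) +
     Rsum (map (fun j => if Nat.eqb j (S k) then Sc (Some d) gap - Sc (at1 x (S k)) gap else 0) fx)).
  { rewrite <- Rsum_map_plus. apply Rsum_map_ext_in. intros j Hj.
    unfold fx in Hj. apply filter_In in Hj. destruct Hj as [Hj _]. apply in_seq in Hj.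
    rewrite at1_upd by lia. destruct (Nat.eqb_spec j (S k)); [rewrite e|]; ring. }
  rewrite E1, E2. unfold fx. rewrite sum_ind_filter by lia.
  destruct (existsb (Nat.eqb (S k)) (map fst pi)); simpl; ring. Qed.

Lemma align_upd_y Sc x y pi k d : (k < length y)%nat -> AL (length x) (length y) pi ->
  align_score Sc x (upd k d y) pi = align_score Sc x y pi
   + Rsum (map (fun q => if Nat.eqb (snd q) (S k) then Sc (at1 x (fst q)) (Some d) - Sc (at1 x (fst q)) (at1 y (S k)) else 0) pi)
   + (if existsb (Nat.eqb (S k)) (map snd pi) then 0 else Sc gap (Some d) - Sc gap (at1 y (S k))).
Proof. intros Hk Hpi. unfold align_score. rewrite length_upd.
  set (fy := filter _ (seq 1 (length y))).
  assert (E1 : Rsum (map (fun p0 => Sc (at1 x (fst p0)) (at1 (upd k d y) (snd p0))) pi) =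
     Rsum (map (fun p0 => Sc (at1 x (fst p0)) (at1 y (snd p0))) pi) +
     Rsum (map (fun q => if Nat.eqb (snd q) (S k) then Sc (at1 x (fst q)) (Some d) - Sc (at1 x (fst q)) (at1 y (S k)) else 0) pi)).
  { rewrite <- Rsum_map_plus. apply Rsum_map_ext_in. intros q Hq.
    unfold AL in Hpi; rewrite Forall_forall in Hpi. specialize (Hpi q Hq).
    rewrite at1_upd by lia. destruct (Nat.eqb_spec (snd q) (S k)); [rewrite e|]; ring. }
  assert (E2 : Rsum (map (fun j => Sc gap (at1 (upd k d y) j)) fy) =
     Rsum (map (fun j => Sc gap (at1 y j)) fy) +
     Rsum (map (fun j => if Nat.eqb j (S k) then Sc gap (Some d) - Sc gap (at1 y (S k)) else 0) fy)).
  { rewrite <- Rsum_map_plus. apply Rsum_map_ext_in. intros j Hj.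
    unfold fy in Hj. apply filter_In in Hj. destruct Hj as [Hj _]. apply in_seq in Hj.
    rewrite at1_upd by lia. destruct (Nat.eqb_spec j (S k)); [rewrite e|]; ring. }
  rewrite E1, E2. unfold fy. rewrite sum_ind_filter by lia.
  destruct (existsb (Nat.eqb (S k)) (map snd pi)); simpl; ring. Qed.

Definition SWX n (F : list letter -> R) x :=
  Rsum (map (fun k => if isCG (at1 x (S k)) then (F (upd k lA x) + F (upd k lT x)) / 2 - F x else 0) (seq 0 n)).
Definition SWY n (F : list letter -> R) y :=
  Rsum (map (fun k => if isCG (at1 y (S k)) then (F (upd k lA y) + F (upd k lT y)) / 2 - F y else 0) (seq 0 n)).

Lemma swx_term Sc x y pi k : (k < length x)%nat -> AL (length x) (length y) pi ->
  (if isCG (at1 x (S k)) then (align_score Sc (upd k lA x) y pi + align_score Sc (upd k lT x) y pi) / 2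
     - align_score Sc x y pi else 0) =
  Rsum (map (fun q => if Nat.eqb (fst q) (S k) then T_X Sc (at1 x (fst q)) (at1 y (snd q)) else 0) pi)
  + (if existsb (Nat.eqb (S k)) (map fst pi) then 0 else T_X Sc (at1 x (S k)) gap).
Proof. intros Hk Hpi. destruct (isCG (at1 x (S k))) eqn:Hc.
  - rewrite !align_upd_x by auto.
    set (R1 := Rsum (map _ pi)).
    set (R2 := Rsum (map (fun q => if Nat.eqb (fst q) (S k) then Sc (Some lT) (at1 y (snd q)) - _ else 0) pi)).
    assert (E : (R1 + R2) / 2 = Rsum (map (fun q => if Nat.eqb (fst q) (S k) then T_X Sc (at1 x (fst q)) (at1 y (snd q)) else 0) pi)).
    { unfold R1, R2. transitivity (Rsum (map (fun q => /2 * (if Nat.eqb (fst q) (S k) then Sc (Some lA) (at1 y (snd q)) - Sc (at1 x (S k)) (at1 y (snd q)) else 0) + /2 * (if Nat.eqb (fst q) (S k) then Sc (Some lT) (at1 y (snd q)) - Sc (at1 x (S k)) (at1 y (snd q)) else 0)) pi)).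
      { rewrite Rsum_map_plus, !Rsum_map_scal. field. }
      apply Rsum_map_ext_in. intros q _. destruct (Nat.eqb_spec (fst q) (S k)).
      - rewrite e. unfold T_X. rewrite Hc. ring.
      - ring. }
    transitivity ((R1 + R2) / 2 + (if existsb (Nat.eqb (S k)) (map fst pi) then 0 else T_X Sc (at1 x (S k)) gap)).
    + unfold T_X. rewrite Hc. destruct (existsb (Nat.eqb (S k)) (map fst pi)); field.
    + rewrite E. auto.
  - rewrite Rsum_map_zero.
    + unfold T_X. rewrite Hc. destruct (existsb _ _); ring.
    + intros q _. destruct (Nat.eqb_spec (fst q) (S k)); auto. rewrite e. unfold T_X. rewrite Hc. auto.
Qed.

Lemma swy_term Sc x y pi k : (k < length y)%nat -> AL (length x) (length y) pi ->
  (if isCG (at1 y (S k)) then (align_score Sc x (upd k lA y) pi + align_score Sc x (upd k lT y) pi) / 2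
     - align_score Sc x y pi else 0) =
  Rsum (map (fun q => if Nat.eqb (snd q) (S k) then T_Y Sc (at1 x (fst q)) (at1 y (snd q)) else 0) pi)
  + (if existsb (Nat.eqb (S k)) (map snd pi) then 0 else T_Y Sc gap (at1 y (S k))).
Proof. intros Hk Hpi. destruct (isCG (at1 y (S k))) eqn:Hc.
  - rewrite !align_upd_y by auto.
    set (R1 := Rsum (map _ pi)).
    set (R2 := Rsum (map (fun q => if Nat.eqb (snd q) (S k) then Sc (at1 x (fst q)) (Some lT) - _ else 0) pi)).
    assert (E : (R1 + R2) / 2 = Rsum (map (fun q => if Nat.eqb (snd q) (S k) then T_Y Sc (at1 x (fst q)) (at1 y (snd q)) else 0) pi)).
    { unfold R1, R2. transitivity (Rsum (map (fun q => /2 * (if Nat.eqb (snd q) (S k) then Sc (at1 x (fst q)) (Some lA) - Sc (at1 x (fst q)) (at1 y (S k)) else 0) + /2 * (if Nat.eqb (snd q) (S k) then Sc (at1 x (fst q)) (Some lT) - Sc (at1 x (fst q)) (at1 y (S k)) else 0)) pi)).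
      { rewrite Rsum_map_plus, !Rsum_map_scal. field. }
      apply Rsum_map_ext_in. intros q _. destruct (Nat.eqb_spec (snd q) (S k)).
      - rewrite e. unfold T_Y. rewrite Hc. ring.
      - ring. }
    transitivity ((R1 + R2) / 2 + (if existsb (Nat.eqb (S k)) (map snd pi) then 0 else T_Y Sc gap (at1 y (S k)))).
    + unfold T_Y. rewrite Hc. destruct (existsb (Nat.eqb (S k)) (map snd pi)); field.
    + rewrite E. auto.
  - rewrite Rsum_map_zero.
    + unfold T_Y. rewrite Hc. destruct (existsb _ _); ring.
    + intros q _. destruct (Nat.eqb_spec (snd q) (S k)); auto. rewrite e. unfold T_Y. rewrite Hc. auto.
Qed.

Lemma sum_shift_ind (a n : nat) (h : R) : (1 <= a <= n)%nat ->
  Rsum (map (fun k => if Nat.eqb a (S k) then h else 0) (seq 0 n)) = h.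
Proof. intros Ha. transitivity (Rsum (map (fun k => if Nat.eqb (a - 1) k then h else 0) (seq 0 n)));
  [|apply sum_ind_seq; lia].
  apply Rsum_map_ext_in. intros k _. destruct (Nat.eqb_spec a (S k)), (Nat.eqb_spec ((a - 1)) k); auto; lia. Qed.

Lemma gap_sum (M : list nat) n (g : nat -> R) :
  Rsum (map (fun k => if existsb (Nat.eqb (S k)) M then 0 else g (S k)) (seq 0 n)) =
  Rsum (map g (filter (fun j => negb (existsb (Nat.eqb j) M)) (seq 1 n))).
Proof. rewrite Rsum_filter. rewrite <- seq_shift, map_map. apply Rsum_map_ext_in.
  intros k _. destruct (existsb _ _); auto. Qed.


Lemma SWX_align Sc x y pi : AL (length x) (length y) pi ->
  SWX (length x) (fun x' => align_score Sc x' y pi) x =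
  Rsum (map (fun q => T_X Sc (at1 x (fst q)) (at1 y (snd q))) pi) +
  Rsum (map (fun j => T_X Sc (at1 x j) gap) (filter (fun j => negb (existsb (Nat.eqb j) (map fst pi))) (seq 1 (length x)))).
Proof. intros Hpi. unfold SWX.
  transitivity (Rsum (map (fun k =>
    Rsum (map (fun q => if Nat.eqb (fst q) (S k) then T_X Sc (at1 x (fst q)) (at1 y (snd q)) else 0) pi)
  + (if existsb (Nat.eqb (S k)) (map fst pi) then 0 else T_X Sc (at1 x (S k)) gap)) (seq 0 (length x)))).
  { apply Rsum_map_ext_in. intros k Hk. apply in_seq in Hk. apply swx_term; [lia|exact Hpi]. }
  rewrite Rsum_map_plus, Rsum_exchange.
  rewrite (gap_sum (map fst pi) (length x) (fun j => T_X Sc (at1 x j) gap)).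
  f_equal. apply Rsum_map_ext_in. intros q Hq.
  unfold AL in Hpi. rewrite Forall_forall in Hpi. specialize (Hpi q Hq).
  transitivity (Rsum (map (fun k => if Nat.eqb (fst q) (S k) then T_X Sc (at1 x (fst q)) (at1 y (snd q)) else 0) (seq 0 (length x)))).
  { apply Rsum_map_ext_in. intros k _. reflexivity. }
  apply sum_shift_ind. lia. Qed.

Lemma SWY_align Sc x y pi : AL (length x) (length y) pi ->
  SWY (length y) (fun y' => align_score Sc x y' pi) y =
  Rsum (map (fun q => T_Y Sc (at1 x (fst q)) (at1 y (snd q))) pi) +
  Rsum (map (fun j => T_Y Sc gap (at1 y j)) (filter (fun j => negb (existsb (Nat.eqb j) (map snd pi))) (seq 1 (length y)))).
Proof. intros Hpi. unfold SWY.
  transitivity (Rsum (map (fun k =>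
    Rsum (map (fun q => if Nat.eqb (snd q) (S k) then T_Y Sc (at1 x (fst q)) (at1 y (snd q)) else 0) pi)
  + (if existsb (Nat.eqb (S k)) (map snd pi) then 0 else T_Y Sc gap (at1 y (S k)))) (seq 0 (length y)))).
  { apply Rsum_map_ext_in. intros k Hk. apply in_seq in Hk. apply swy_term; [lia|exact Hpi]. }
  rewrite Rsum_map_plus, Rsum_exchange.
  rewrite (gap_sum (map snd pi) (length y) (fun j => T_Y Sc gap (at1 y j))).
  f_equal. apply Rsum_map_ext_in. intros q Hq.
  unfold AL in Hpi. rewrite Forall_forall in Hpi. specialize (Hpi q Hq).
  transitivity (Rsum (map (fun k => if Nat.eqb (snd q) (S k) then T_Y Sc (at1 x (fst q)) (at1 y (snd q)) else 0) (seq 0 (length y)))).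
  { apply Rsum_map_ext_in. intros k _. reflexivity. }
  apply sum_shift_ind. lia. Qed.

Lemma T_align Sc x y pi : AL (length x) (length y) pi ->
  align_score (T_DNA Sc) x y pi =
  SWX (length x) (fun x' => align_score Sc x' y pi) x + SWY (length y) (fun y' => align_score Sc x y' pi) y.
Proof. intros Hpi. rewrite SWX_align, SWY_align by auto.
  unfold align_score, T_DNA. rewrite !Rsum_map_plus.
  assert (Z1 : forall l, Rsum (map (fun j => T_Y Sc (at1 x j) gap) l) = 0).
  { intros; apply Rsum_map_zero; intros; reflexivity. }
  assert (Z2 : forall l, Rsum (map (fun j => T_X Sc gap (at1 y j)) l) = 0).
  { intros; apply Rsum_map_zero; intros; reflexivity. }
  rewrite Z1, Z2. ring. Qed.

Lemma align_perturb Sc eps x y pi :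
  align_score (perturb Sc eps) x y pi = align_score Sc x y pi - eps * align_score (T_DNA Sc) x y pi.
Proof.
  assert (H : forall {A} (l : list A) f g, Rsum (map (fun q => f q - eps * g q) l) = Rsum (map f l) - eps * Rsum (map g l)).
  { intros A l f g. induction l; simpl; [ring|rewrite IHl; ring]. }
  unfold align_score, perturb. rewrite !H. ring. Qed.

Lemma sublists_incl {A} (l s : list A) : In s (sublists l) -> forall a, In a s -> In a l.
Proof. revert s; induction l; simpl; intros s H a0 Ha.
  - destruct H as [<-|[]]. destruct Ha.
  - apply in_app_or in H. destruct H as [H|H].
    + apply in_map_iff in H. destruct H as (s' & <- & Hs'). destruct Ha as [->|Ha]; auto.
      right. eapply IHl; eauto.
    + right. eapply IHl; eauto. Qed.

Definition VA (x y : list letter) pi := pi = [] \/ In pi (alignments (length x) (length y)).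

Lemma VA_props x y pi : VA x y pi -> AL (length x) (length y) pi /\ strictly_incr pi = true.
Proof. intros [->|H]. split; [constructor|reflexivity].
  unfold alignments in H. apply filter_In in H. destruct H as [H1 H2]. split; auto.
  unfold AL. rewrite Forall_forall. intros q Hq. pose proof (sublists_incl _ _ H1 q Hq) as Hq'.
  destruct q as [a b]. apply in_prod_iff in Hq'. destruct Hq' as [Ha Hb].
  apply in_seq in Ha. apply in_seq in Hb. simpl. lia. Qed.

Lemma VA_updx x y pi k d : VA x y pi <-> VA (upd k d x) y pi.
Proof. unfold VA. rewrite length_upd. tauto. Qed.
Lemma VA_updy x y pi k d : VA x y pi <-> VA x (upd k d y) pi.
Proof. unfold VA. rewrite length_upd. tauto. Qed.

Lemma fold_max_opt {A} (f : A -> R) a0 (l : list A) :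
  exists a, (a = a0 \/ In a l) /\ fold_right Rmax (f a0) (map f l) = f a.
Proof. induction l; simpl. exists a0; auto.
  destruct IHl as (b & Hb & E). rewrite E. destruct (Rle_dec (f a) (f b)).
  - exists b. rewrite Rmax_right by auto. tauto.
  - exists a. rewrite Rmax_left by lra. tauto. Qed.

Lemma fold_max_ge {A} (f : A -> R) a0 (l : list A) a :
  (a = a0 \/ In a l) -> f a <= fold_right Rmax (f a0) (map f l).
Proof. induction l as [|b l IHl]; simpl; intros H.
  - destruct H as [->|[]]. lra.
  - destruct H as [H|[<-|H]].
    + eapply Rle_trans; [|apply Rmax_r]. apply IHl. auto.
    + apply Rmax_l.
    + eapply Rle_trans; [|apply Rmax_r]. apply IHl. auto. Qed.

Lemma L_opt Sc x y : exists pi, VA x y pi /\ L_S Sc x y = align_score Sc x y pi.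
Proof. unfold L_S. destruct (fold_max_opt (align_score Sc x y) [] (alignments (length x) (length y))) as (a & Ha & E).
  exists a. split; [destruct Ha; [left|right]; auto | exact E]. Qed.

Lemma L_ge Sc x y pi : VA x y pi -> align_score Sc x y pi <= L_S Sc x y.
Proof. intros H. unfold L_S. apply fold_max_ge. destruct H; auto. Qed.

Lemma SWX_mono n F G x : F x = G x -> (forall k d, F (upd k d x) <= G (upd k d x)) -> SWX n F x <= SWX n G x.
Proof. intros H1 H2. unfold SWX. apply Rsum_map_le_in. intros k _. destruct (isCG _).
  - pose proof (H2 k lA). pose proof (H2 k lT). lra.
  - lra. Qed.
Lemma SWY_mono n F G y : F y = G y -> (forall k d, F (upd k d y) <= G (upd k d y)) -> SWY n F y <= SWY n G y.
Proof. intros H1 H2. unfold SWY. apply Rsum_map_le_in. intros k _. destruct (isCG _).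
  - pose proof (H2 k lA). pose proof (H2 k lT). lra.
  - lra. Qed.

Lemma pointwise Sc eps x y : 0 < eps ->
  L_S Sc x y - L_S (perturb Sc eps) x y <=
  eps * (SWX (length x) (fun x' => L_S Sc x' y) x + SWY (length y) (fun y' => L_S Sc x y') y).
Proof. intros He. destruct (L_opt Sc x y) as (pi & Hv & E).
  pose proof (L_ge (perturb Sc eps) x y pi Hv) as H1. rewrite align_perturb in H1.
  destruct (VA_props _ _ _ Hv) as [HAL _].
  rewrite T_align in H1 by auto.
  assert (SWX (length x) (fun x' => align_score Sc x' y pi) x <= SWX (length x) (fun x' => L_S Sc x' y) x).
  { apply SWX_mono; auto. intros k d. apply L_ge. apply VA_updx; auto. }
  assert (SWY (length y) (fun y' => align_score Sc x y' pi) y <= SWY (length y) (fun y' => L_S Sc x y') y).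
  { apply SWY_mono; auto. intros k d. apply L_ge. apply VA_updy; auto. }
  rewrite E. nra. Qed.

Lemma si_cons q l : strictly_incr (q :: l) = true ->
  strictly_incr l = true /\ forall r, In r l -> (fst q < fst r)%nat /\ (snd q < snd r)%nat.
Proof. revert q; induction l as [|q' l IH]; intros q H.
  - split; auto. intros r [].
  - simpl in H. apply andb_prop in H. destruct H as [H H3]. apply andb_prop in H. destruct H as [H1 H2].
    apply Nat.ltb_lt in H1. apply Nat.ltb_lt in H2. split; auto.
    destruct (IH q' H3) as [_ H4]. intros r [<-|Hr]; auto. specialize (H4 r Hr). lia. Qed.

Lemma ind_sum_bound (proj : nat * nat -> nat) pi a h B :
  (forall q l, strictly_incr (q :: l) = true -> forall r, In r l -> (proj q < proj r)%nat) ->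
  strictly_incr pi = true -> (forall q, - B <= h q <= B) -> 0 <= B ->
  - B <= Rsum (map (fun q => if Nat.eqb (proj q) a then h q else 0) pi) <= B.
Proof. intros Hp. induction pi as [|q l IH]; simpl; intros Hs Hh HB. lra.
  assert (Hl : strictly_incr l = true) by (apply (si_cons q l Hs)).
  destruct (Nat.eqb_spec (proj q) a).
  - rewrite Rsum_map_zero. pose proof (Hh q); lra.
    intros r Hr. pose proof (Hp q l Hs r Hr). destruct (Nat.eqb_spec (proj r) a); auto. lia.
  - specialize (IH Hl Hh HB). lra. Qed.

Definition gl : list gletter := [None; Some lA; Some lT; Some lC; Some lG].
Definition Mof (Sc : scoring) := Rsum (map (fun uv => Rabs (Sc (fst uv) (snd uv))) (list_prod gl gl)).

Lemma Mof_bound Sc u v : - Mof Sc <= Sc u v <= Mof Sc.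
Proof. assert (H : Rabs (Sc u v) <= Mof Sc).
  { unfold Mof. apply (Rsum_nonneg_le _ (fun uv => Rabs (Sc (fst uv) (snd uv))) (u, v)).
    intros; apply Rabs_pos. apply in_prod_iff. unfold gl. split; [destruct u as [[]|]|destruct v as [[]|]]; simpl; tauto. }
  pose proof (Rle_abs (Sc u v)). pose proof (Rle_abs (- Sc u v)). rewrite Rabs_Ropp in *. lra. Qed.

Lemma Mof_nonneg Sc : 0 <= Mof Sc.
Proof. pose proof (Mof_bound Sc None None). lra. Qed.

Lemma align_bd_x Sc x y pi k d : VA x y pi ->
  - (4 * Mof Sc) <= align_score Sc (upd k d x) y pi - align_score Sc x y pi <= 4 * Mof Sc.
Proof. intros Hv. pose proof (Mof_nonneg Sc). destruct (le_lt_dec (length x) k).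
  - rewrite upd_out by auto. lra.
  - destruct (VA_props _ _ _ Hv) as [HAL Hs]. rewrite align_upd_x by auto.
    assert (H1 := ind_sum_bound fst pi (S k) (fun q => Sc (Some d) (at1 y (snd q)) - Sc (at1 x (S k)) (at1 y (snd q))) (2 * Mof Sc)).
    assert (H2 : - (2 * Mof Sc) <= (if existsb (Nat.eqb (S k)) (map fst pi) then 0 else Sc (Some d) gap - Sc (at1 x (S k)) gap) <= 2 * Mof Sc).
    { destruct (existsb _ _). lra. pose proof (Mof_bound Sc (Some d) gap). pose proof (Mof_bound Sc (at1 x (S k)) gap). lra. }
    cut (- (2 * Mof Sc) <= Rsum (map (fun q => if Nat.eqb (fst q) (S k) then Sc (Some d) (at1 y (snd q)) - Sc (at1 x (S k)) (at1 y (snd q)) else 0) pi) <= 2 * Mof Sc). lra.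
    apply H1; auto; try lra.
    + intros q l0 Hq r Hr. apply (proj2 (si_cons q l0 Hq) r Hr).
    + intros q. pose proof (Mof_bound Sc (Some d) (at1 y (snd q))). pose proof (Mof_bound Sc (at1 x (S k)) (at1 y (snd q))). lra. Qed.

Lemma align_bd_y Sc x y pi k d : VA x y pi ->
  - (4 * Mof Sc) <= align_score Sc x (upd k d y) pi - align_score Sc x y pi <= 4 * Mof Sc.
Proof. intros Hv. pose proof (Mof_nonneg Sc). destruct (le_lt_dec (length y) k).
  - rewrite upd_out by auto. lra.
  - destruct (VA_props _ _ _ Hv) as [HAL Hs]. rewrite align_upd_y by auto.
    assert (H1 := ind_sum_bound snd pi (S k) (fun q => Sc (at1 x (fst q)) (Some d) - Sc (at1 x (fst q)) (at1 y (S k))) (2 * Mof Sc)).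
    assert (H2 : - (2 * Mof Sc) <= (if existsb (Nat.eqb (S k)) (map snd pi) then 0 else Sc gap (Some d) - Sc gap (at1 y (S k))) <= 2 * Mof Sc).
    { destruct (existsb _ _). lra. pose proof (Mof_bound Sc gap (Some d)). pose proof (Mof_bound Sc gap (at1 y (S k))). lra. }
    cut (- (2 * Mof Sc) <= Rsum (map (fun q => if Nat.eqb (snd q) (S k) then Sc (at1 x (fst q)) (Some d) - Sc (at1 x (fst q)) (at1 y (S k)) else 0) pi) <= 2 * Mof Sc). lra.
    apply H1; auto; try lra.
    + intros q l0 Hq r Hr. apply (proj2 (si_cons q l0 Hq) r Hr).
    + intros q. pose proof (Mof_bound Sc (at1 x (fst q)) (Some d)). pose proof (Mof_bound Sc (at1 x (fst q)) (at1 y (S k))). lra. Qed.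

Lemma L_BD2 Sc : BD2 (L_S Sc) (4 * Mof Sc).
Proof. split.
  - intros y x i d. simpl.
    destruct (L_opt Sc (upd i d x) y) as (p1 & H1 & E1). destruct (L_opt Sc x y) as (p0 & H0 & E0).
    pose proof (L_ge Sc x y p1 (proj2 (VA_updx x y p1 i d) H1)).
    pose proof (L_ge Sc (upd i d x) y p0 (proj1 (VA_updx x y p0 i d) H0)).
    pose proof (align_bd_x Sc x y p1 i d (proj2 (VA_updx x y p1 i d) H1)).
    pose proof (align_bd_x Sc x y p0 i d H0). lra.
  - intros x y i d. simpl.
    destruct (L_opt Sc x (upd i d y)) as (p1 & H1 & E1). destruct (L_opt Sc x y) as (p0 & H0 & E0).
    pose proof (L_ge Sc x y p1 (proj2 (VA_updy x y p1 i d) H1)).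
    pose proof (L_ge Sc x (upd i d y) p0 (proj1 (VA_updy x y p0 i d) H0)).
    pose proof (align_bd_y Sc x y p1 i d (proj2 (VA_updy x y p1 i d) H1)).
    pose proof (align_bd_y Sc x y p0 i d H0). lra. Qed.

Lemma at1_cons c w k : at1 (c :: w) (S (S k)) = at1 w (S k).
Proof. unfold at1. simpl. rewrite Nat.sub_0_r. auto. Qed.
Lemma at1_cons0 c w : at1 (c :: w) 1 = Some c.
Proof. reflexivity. Qed.

Lemma Ew_lin4 p n a b c d f1 f2 f3 f4 :
  Ew p n (fun w => a * f1 w + b * f2 w + c * f3 w + d * f4 w) =
  a * Ew p n f1 + b * Ew p n f2 + c * Ew p n f3 + d * Ew p n f4.
Proof. rewrite !Ew_plus, !Ew_scal. auto. Qed.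

Definition Ind x k : R := if isCG (at1 x (S k)) then 1 else 0.

Lemma swap_word p : good p -> forall n F k, (k < n)%nat ->
  Ew p n (fun x => if isCG (at1 x (S k)) then (F (upd k lA x) + F (upd k lT x)) / 2 - F x else 0)
  = - / (p lA + p lT) * Ew p n (fun x => (Ind x k - (p lC + p lG)) * F x).
Proof. intros Hp. pose proof Hp as (h1&h2&h3&h4&h5). induction n; intros F k Hk; [lia|].
  rewrite !Ew_S. destruct k as [|k].
  - rewrite <- Ew_scal. apply Ew_ext_in. intros w _. unfold Ind. rewrite !at1_cons0. cbn [upd isCG].
    rewrite h1, h2. replace (p lG) with ((1 - 2 * p lT) / 2) by lra. field. lra.
  - transitivity (Ew p n (fun w =>
      p lA * (if isCG (at1 w (S k)) then (F (lA :: upd k lA w) + F (lA :: upd k lT w)) / 2 - F (lA :: w) else 0) +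
      p lT * (if isCG (at1 w (S k)) then (F (lT :: upd k lA w) + F (lT :: upd k lT w)) / 2 - F (lT :: w) else 0) +
      p lC * (if isCG (at1 w (S k)) then (F (lC :: upd k lA w) + F (lC :: upd k lT w)) / 2 - F (lC :: w) else 0) +
      p lG * (if isCG (at1 w (S k)) then (F (lG :: upd k lA w) + F (lG :: upd k lT w)) / 2 - F (lG :: w) else 0))).
    { apply Ew_ext_in. intros w _. rewrite !at1_cons. reflexivity. }
    rewrite Ew_lin4.
    rewrite (IHn (fun w => F (lA :: w)) k), (IHn (fun w => F (lT :: w)) k),
            (IHn (fun w => F (lC :: w)) k), (IHn (fun w => F (lG :: w)) k) by lia.
    transitivity (- / (p lA + p lT) * Ew p n (fun w =>
      p lA * ((Ind w k - (p lC + p lG)) * F (lA :: w)) +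
      p lT * ((Ind w k - (p lC + p lG)) * F (lT :: w)) +
      p lC * ((Ind w k - (p lC + p lG)) * F (lC :: w)) +
      p lG * ((Ind w k - (p lC + p lG)) * F (lG :: w)))).
    { rewrite Ew_lin4. ring. }
    f_equal. apply Ew_ext_in. intros w _. unfold Ind. rewrite !at1_cons. reflexivity.
Qed.

Lemma Expect_plus p n f g : Expect p n (fun x y => f x y + g x y) = Expect p n f + Expect p n g.
Proof. rewrite !Expect_Ew. rewrite <- Ew_plus. apply Ew_ext_in. intros. apply Ew_plus. Qed.
Lemma Expect_scal p n a f : Expect p n (fun x y => a * f x y) = a * Expect p n f.
Proof. rewrite !Expect_Ew. rewrite <- Ew_scal. apply Ew_ext_in. intros. apply Ew_scal. Qed.
Lemma Expect_minus p n f g : Expect p n (fun x y => f x y - g x y) = Expect p n f - Expect p n g.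
Proof. rewrite !Expect_Ew. rewrite <- Ew_minus. apply Ew_ext_in. intros. apply Ew_minus. Qed.
Lemma Expect_const p n a : good p -> Expect p n (fun _ _ => a) = a.
Proof. intros Hp. rewrite Expect_Ew. transitivity (Ew p n (fun _ => a)); [|apply Ew_const; auto].
  apply Ew_ext_in. intros. apply Ew_const; auto. Qed.
Lemma Expect_ext p n f g : (forall x y, In x (words n) -> In y (words n) -> f x y = g x y) -> Expect p n f = Expect p n g.
Proof. intros H. rewrite !Expect_Ew. apply Ew_ext_in. intros. apply Ew_ext_in. intros; auto. Qed.
Lemma Expect_mono p n f g : good p -> (forall x y, In x (words n) -> In y (words n) -> f x y <= g x y) -> Expect p n f <= Expect p n g.
Proof. intros Hp H. rewrite !Expect_Ew. apply Ew_mono; auto. intros. apply Ew_mono; auto. Qed.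
Lemma Expect_sum {A} p n (l : list A) h :
  Expect p n (fun x y => Rsum (map (fun k => h k x y) l)) = Rsum (map (fun k => Expect p n (h k)) l).
Proof. induction l; simpl.
  - rewrite Expect_Ew. transitivity (Ew p n (fun _ => 0)). apply Ew_ext_in; intros; apply Ew_zero. apply Ew_zero.
  - rewrite Expect_plus. rewrite IHl. auto. Qed.

Lemma Ew_avg p n f1 f2 f3 : Ew p n (fun y => (f1 y + f2 y) / 2 - f3 y) = (Ew p n f1 + Ew p n f2) / 2 - Ew p n f3.
Proof. transitivity (Ew p n (fun y => /2 * f1 y + /2 * f2 y + (-1) * f3 y)).
  apply Ew_ext_in; intros; field. rewrite !Ew_plus, !Ew_scal. field. Qed.

Lemma swapX_k p n f k : good p -> (k < n)%nat ->
  Expect p n (fun x y => if isCG (at1 x (S k)) then (f (upd k lA x) y + f (upd k lT x) y) / 2 - f x y else 0)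
  = - / (p lA + p lT) * Expect p n (fun x y => (Ind x k - (p lC + p lG)) * f x y).
Proof. intros Hp Hk. rewrite !Expect_Ew.
  set (G := fun x => Ew p n (fun y => f x y)).
  transitivity (Ew p n (fun x => if isCG (at1 x (S k)) then (G (upd k lA x) + G (upd k lT x)) / 2 - G x else 0)).
  { apply Ew_ext_in. intros x _. destruct (isCG _). apply Ew_avg. apply Ew_zero. }
  rewrite swap_word by auto. f_equal. apply Ew_ext_in. intros x _. unfold G. rewrite Ew_scal. auto. Qed.

Lemma swapY_k p n f k : good p -> (k < n)%nat ->
  Expect p n (fun x y => if isCG (at1 y (S k)) then (f x (upd k lA y) + f x (upd k lT y)) / 2 - f x y else 0)
  = - / (p lA + p lT) * Expect p n (fun x y => (Ind y k - (p lC + p lG)) * f x y).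
Proof. intros Hp Hk. rewrite !Expect_Ew. rewrite <- Ew_scal. apply Ew_ext_in. intros x _.
  apply (swap_word p Hp n (fun y => f x y) k Hk). Qed.

Definition Vf p n x y := Rsum (map (fun k => Ind x k - (p lC + p lG)) (seq 0 n)) +
                         Rsum (map (fun k => Ind y k - (p lC + p lG)) (seq 0 n)).

Lemma swap_total p n f : good p ->
  Expect p n (fun x y => SWX n (fun x' => f x' y) x + SWY n (fun y' => f x y') y) =
  - / (p lA + p lT) * Expect p n (fun x y => Vf p n x y * f x y).
Proof. intros Hp. rewrite Expect_plus. unfold SWX, SWY.
  rewrite (Expect_sum p n (seq 0 n) (fun k x y => if isCG (at1 x (S k)) then (f (upd k lA x) y + f (upd k lT x) y) / 2 - f x y else 0)).
  rewrite (Expect_sum p n (seq 0 n) (fun k x y => if isCG (at1 y (S k)) then (f x (upd k lA y) + f x (upd k lT y)) / 2 - f x y else 0)).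
  rewrite (Rsum_map_ext_in (seq 0 n) _ (fun k => - / (p lA + p lT) * Expect p n (fun x y => (Ind x k - (p lC + p lG)) * f x y)))
    by (intros k Hk; apply in_seq in Hk; apply swapX_k; auto; lia).
  rewrite (Rsum_map_ext_in (seq 0 n) (fun k => Expect p n _) (fun k => - / (p lA + p lT) * Expect p n (fun x y => (Ind y k - (p lC + p lG)) * f x y)))
    by (intros k Hk; apply in_seq in Hk; apply swapY_k; auto; lia).
  rewrite !Rsum_map_scal. rewrite <- Rmult_plus_distr_l. f_equal.
  transitivity (Expect p n (fun x y => Rsum (map (fun k => (Ind x k - (p lC + p lG)) * f x y) (seq 0 n)) +
      Rsum (map (fun k => (Ind y k - (p lC + p lG)) * f x y) (seq 0 n)))).
  - rewrite Expect_plus. rewrite (Expect_sum p n (seq 0 n) (fun k x y => (Ind x k - (p lC + p lG)) * f x y)).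
    rewrite (Expect_sum p n (seq 0 n) (fun k x y => (Ind y k - (p lC + p lG)) * f x y)). auto.
  - apply Expect_ext. intros x y _ _. unfold Vf.
    assert (H : forall (g : nat -> R) l, Rsum (map (fun k => g k * f x y) l) = Rsum (map g l) * f x y).
    { intros g l; induction l; simpl; [ring|rewrite IHl; ring]. }
    rewrite !H. ring. Qed.

Lemma Ew_Ind_zero p n k : good p -> (k < n)%nat -> Ew p n (fun x => Ind x k - (p lC + p lG)) = 0.
Proof. intros Hp Hk. pose proof (swap_word p Hp n (fun _ => 1) k Hk) as H.
  rewrite (Ew_ext_in p n _ (fun _ => 0)) in H by (intros; destruct (isCG _); field).
  rewrite Ew_zero in H. pose proof Hp as (h1&h2&h3&h4&h5).
  assert (Hn : - / (p lA + p lT) <> 0). { apply Ropp_neq_0_compat. apply Rinv_neq_0_compat. lra. }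
  rewrite (Ew_ext_in p n _ (fun x => (Ind x k - (p lC + p lG)) * 1)) by (intros; ring).
  symmetry in H. apply Rmult_integral in H. destruct H; [contradiction|auto]. Qed.

Lemma Expect_Vf p n : good p -> Expect p n (Vf p n) = 0.
Proof. intros Hp. unfold Vf.
  rewrite (Expect_plus p n (fun x y => Rsum (map (fun k => Ind x k - (p lC + p lG)) (seq 0 n)))
    (fun x y => Rsum (map (fun k => Ind y k - (p lC + p lG)) (seq 0 n)))).
  rewrite (Expect_sum p n (seq 0 n) (fun k x y => Ind x k - (p lC + p lG))).
  rewrite (Expect_sum p n (seq 0 n) (fun k x y => Ind y k - (p lC + p lG))).
  rewrite !Rsum_map_zero; [ring| |].
  - intros k Hk. apply in_seq in Hk. rewrite Expect_Ew.
    transitivity (Ew p n (fun _ => 0)); [|apply Ew_zero]. apply Ew_ext_in. intros. apply Ew_Ind_zero; auto; lia.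
  - intros k Hk. apply in_seq in Hk. rewrite Expect_Ew.
    transitivity (Ew p n (fun x => Ind x k - (p lC + p lG))). apply Ew_ext_in. intros. apply Ew_const; auto.
    apply Ew_Ind_zero; auto; lia. Qed.

Lemma Ind_range x k : 0 <= Ind x k <= 1.
Proof. unfold Ind. destruct (isCG _); lra. Qed.

Lemma cnt_bd p n x i d :
  - 1 <= Rsum (map (fun k => Ind (upd i d x) k - (p lC + p lG)) (seq 0 n)) -
         Rsum (map (fun k => Ind x k - (p lC + p lG)) (seq 0 n)) <= 1.
Proof. destruct (le_lt_dec (length x) i).
  - rewrite upd_out by auto. lra.
  - set (h := (if isCG (Some d) then 1 else 0) - Ind x i).
    assert (E : Rsum (map (fun k => Ind (upd i d x) k - (p lC + p lG)) (seq 0 n)) -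
         Rsum (map (fun k => Ind x k - (p lC + p lG)) (seq 0 n)) =
         Rsum (map (fun k => if Nat.eqb i k then h else 0) (seq 0 n))).
    { assert (H : forall (f g : nat -> R) l, Rsum (map f l) - Rsum (map g l) = Rsum (map (fun k => f k - g k) l)).
      { intros f g l0; induction l0; simpl; [ring|rewrite <- IHl0; ring]. }
      rewrite H. apply Rsum_map_ext_in. intros k _. unfold Ind. rewrite at1_upd by lia.
      destruct (Nat.eqb_spec (S k) (S i)), (Nat.eqb_spec i k); try lia.
      - subst. unfold h, Ind. ring.
      - ring. }
    rewrite E. assert (-1 <= h <= 1). { unfold h. pose proof (Ind_range x i). destruct (isCG _); lra. }
    destruct (le_lt_dec n i).
    + rewrite sum_ind_seq_out by lia. lra.
    + rewrite sum_ind_seq by lia. lra. Qed.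

Lemma Vf_BD2 p n : BD2 (Vf p n) 1.
Proof. split.
  - intros y x i d. unfold Vf. pose proof (cnt_bd p n x i d). lra.
  - intros x y i d. unfold Vf. pose proof (cnt_bd p n y i d). lra. Qed.

Lemma quad a b c : 0 <= b -> (forall t, 0 <= c + 2 * t * a + t ^ 2 * b) -> a ^ 2 <= b * c.
Proof. intros Hb H. destruct (Rle_lt_dec b 0).
  - assert (b = 0) by lra. subst. destruct (Req_dec a 0). subst; lra.
    pose proof (H (- (c + 1) / (2 * a))) as H1.
    replace (c + 2 * (- (c + 1) / (2 * a)) * a + (- (c + 1) / (2 * a)) ^ 2 * 0) with (-1) in H1 by (field; auto). lra.
  - pose proof (H (- a / b)). replace (c + 2 * (- a / b) * a + (- a / b) ^ 2 * b) with (c - a^2/b) in H0 by (field; lra).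
    assert (0 <= (c - a^2/b) * b) by (apply Rmult_le_pos; lra).
    replace ((c - a^2/b) * b) with (b*c - a^2) in H1 by (field; lra). lra. Qed.

Lemma Expect_CS p n f g : good p ->
  (Expect p n (fun x y => f x y * g x y)) ^ 2 <=
  Expect p n (fun x y => g x y ^ 2) * Expect p n (fun x y => f x y ^ 2).
Proof. intros Hp. apply quad.
  - rewrite <- (Expect_const p n 0 Hp). apply Expect_mono; auto. intros. apply pow2_ge_0.
  - intros t. transitivity (Expect p n (fun x y => (f x y + t * g x y) ^ 2)).
    + rewrite <- (Expect_const p n 0 Hp). apply Expect_mono; auto. intros. apply pow2_ge_0.
    + right. transitivity (Expect p n (fun x y => f x y ^ 2 + (2 * t) * (f x y * g x y) + (t^2) * (g x y ^ 2))).
      { apply Expect_ext. intros; ring. }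
      rewrite !Expect_plus, !Expect_scal. ring. Qed.

Theorem mainTheorem11 (p : letter -> R) (S : scoring) :
  p lA = p lT -> p lC = p lG -> 0 < p lA -> 0 < p lC ->
  p lA + p lT + p lC + p lG = 1 ->
  symmetric_scoring S ->
  (exists eps : R, 0 < eps /\
     exists l1 l2 : R, lambda_is p S l1 /\ lambda_is p (perturb S eps) l2 /\ l1 - l2 > 0) ->
  exists c1 c2 : R, 0 < c1 /\ 0 < c2 /\
    exists N : nat, forall n : nat, (N <= n)%nat ->
      c1 * INR n <= Var_Ln p S n <= c2 * INR n.
Proof.
  intros h1 h2 h3 h4 h5 _ (eps & He & l1 & l2 & Hl1 & Hl2 & Hd).
  assert (Hp : good p) by (repeat split; auto).
  set (M := Mof S). set (dl := l1 - l2).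
  set (K := (p lA + p lT) * dl / (2 * eps)).
  assert (HK : 0 < K) by (unfold K, dl; apply Rdiv_lt_0_compat; nra).
  exists (K ^ 2 / 2), (2 * (4 * M) ^ 2 + 1).
  split; [nra|]. split; [pose proof (pow2_ge_0 (4 * M)); lra|].
  destruct (Hl1 (dl / 4)) as (N1 & HN1); [unfold dl; lra|].
  destruct (Hl2 (dl / 4)) as (N2 & HN2); [unfold dl; lra|].
  exists (max (max N1 N2) 1). intros n Hn.
  assert (Hvar : Var_Ln p S n = Expect p n (fun x y => L_S S x y ^ 2) - (Expect p n (L_S S)) ^ 2) by reflexivity.
  pose proof (pos_INR n) as Hn0.
  split.
  2:{ rewrite Hvar. eapply Rle_trans. apply (pair_var p n (L_S S) (4 * M) Hp (L_BD2 S)).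
      pose proof (pow2_ge_0 (4 * M)). nra. }
  assert (Hn1 : 1 <= INR n) by (apply (le_INR 1); lia).
  specialize (HN1 n ltac:(lia)). specialize (HN2 n ltac:(lia)).
  unfold R_dist in HN1, HN2. apply Rabs_def2 in HN1. apply Rabs_def2 in HN2.
  unfold lambda_n in HN1, HN2.
  set (S' := perturb S eps) in *.
  set (D := E_Ln p S n - E_Ln p S' n).
  assert (HD : INR n * dl / 2 <= D).
  { assert (E_Ln p S n / INR n - E_Ln p S' n / INR n >= dl / 2) by (unfold dl in *; lra).
    unfold D. replace (E_Ln p S n - E_Ln p S' n) with (INR n * (E_Ln p S n / INR n - E_Ln p S' n / INR n)) by (field; lra).
    nra. }
  set (a := Expect p n (fun x y => Vf p n x y * L_S S x y)).
  assert (HDa : D <= eps * (- / (p lA + p lT) * a)).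
  { unfold D, E_Ln. rewrite <- Expect_minus. unfold a. rewrite <- (swap_total p n (L_S S) Hp).
    rewrite <- Expect_scal. apply Expect_mono; auto. intros x y Hx Hy.
    pose proof (pointwise S eps x y He) as H. rewrite (words_length n x Hx), (words_length n y Hy) in H. exact H. }
  assert (Ha : a <= - K * INR n).
  { assert (Hpos : 0 < p lA + p lT) by lra.
    assert (eps * (- / (p lA + p lT) * a) = - (eps / (p lA + p lT)) * a) as E by (field; lra).
    rewrite E in HDa. unfold K.
    assert (INR n * dl / 2 <= - (eps / (p lA + p lT)) * a) by lra.
    assert (a * (eps / (p lA + p lT)) <= - (INR n * dl / 2)) by lra.
    assert (0 < eps / (p lA + p lT)) by (apply Rdiv_lt_0_compat; lra).
    apply (Rmult_le_reg_r (eps / (p lA + p lT))); auto.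
    replace (- ((p lA + p lT) * dl / (2 * eps)) * INR n * (eps / (p lA + p lT))) with (- (INR n * dl / 2)) by (field; lra).
    lra. }
  set (m := Expect p n (L_S S)).
  assert (HaU : Expect p n (fun x y => Vf p n x y * (L_S S x y - m)) = a).
  { transitivity (Expect p n (fun x y => Vf p n x y * L_S S x y + (- m) * Vf p n x y)).
    apply Expect_ext; intros; ring. rewrite Expect_plus, Expect_scal. fold a.
    rewrite (Expect_Vf p n Hp). ring. }
  assert (HU2 : Expect p n (fun x y => (L_S S x y - m) ^ 2) = Var_Ln p S n).
  { rewrite Hvar. transitivity (Expect p n (fun x y => L_S S x y ^ 2 + (-2 * m) * L_S S x y + (fun _ _ => m ^ 2) x y)).
    apply Expect_ext; intros; simpl; ring. rewrite !Expect_plus, Expect_scal, Expect_const by auto. fold m. ring. }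
  assert (HV2 : Expect p n (fun x y => Vf p n x y ^ 2) <= 2 * INR n).
  { pose proof (pair_var p n (Vf p n) 1 Hp (Vf_BD2 p n)) as H. rewrite Expect_Vf in H by auto. lra. }
  pose proof (Expect_CS p n (Vf p n) (fun x y => L_S S x y - m) Hp) as HCS.
  cbv beta in HCS. rewrite HaU, HU2 in HCS.
  assert (HVnn : 0 <= Var_Ln p S n).
  { rewrite <- HU2. rewrite <- (Expect_const p n 0 Hp). apply Expect_mono; auto. intros; apply pow2_ge_0. }
  assert (HVf0 : 0 <= Expect p n (fun x y => Vf p n x y ^ 2)).
  { rewrite <- (Expect_const p n 0 Hp). apply Expect_mono; auto. intros; apply pow2_ge_0. }
  assert (Hsq : (K * INR n) ^ 2 <= a ^ 2).
  { assert (0 <= K * INR n) by (apply Rmult_le_pos; lra).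
    replace ((K * INR n) ^ 2) with ((K * INR n) * (K * INR n)) by ring.
    replace (a ^ 2) with ((-a) * (-a)) by ring. apply Rmult_le_compat; lra. }
  assert (H2 : (K * INR n) ^ 2 <= 2 * INR n * Var_Ln p S n).
  { eapply Rle_trans; [exact Hsq|]. eapply Rle_trans; [exact HCS|]. rewrite Rmult_comm. apply Rmult_le_compat_r; auto. }
  assert (H3 : INR n * (K ^ 2 / 2 * INR n) <= INR n * Var_Ln p S n) by nra.
  apply Rmult_le_reg_l in H3; [|lra]. lra.
Qed.
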